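(* Let $w_1=a$, $w_2=b$, $w_3=ba$, $w_4=baabbaa$, and $w_n = b\cdot\mathit{TM}_{2n-8}\cdot\overline{\mathit{TM}_{2n-6}}\cdot\overline{\mathit{TM}_{2n-6}}'$ for $n\ge 5$, and let $W=w_1w_2w_3\cdots$ be their infinite concatenation. Then $\tau^2(W)=W$.
   Context: Strings are over $\{a,b\}$. For a binary string $w$, $\overline{w}$ is obtained by exchanging $a$ and $b$ letterwise, and $w'$ is $w$ with its last letter removed; $\overline{w}'$ means $(\overline{w})'$. Thue–Morse words: $\mathit{TM}_0=a$ and $\mathit{TM}_k=\mathit{TM}_{k-1}\cdot\overline{\mathit{TM}_{k-1}}$ for $k\ge1$. The Thue–Morse morphism $\tau$ is the morphism with $\tau(a)=ab$, $\tau(b)=ba$, extended letterwise to infinite words; $\tau^2=\tau\circ\tau$. *)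

(* Defs.v *)
(* Letters: a = false, b = true. *)
From mathcomp Require Import all_boot.
Set Implicit Arguments. Unset Strict Implicit. Unset Printing Implicit Defensive.

Definition la : bool := false.
Definition lb : bool := true.

Definition compl (w : seq bool) : seq bool := map negb w.
Definition dropLast (w : seq bool) : seq bool := take (size w).-1 w.

Fixpoint TM (k : nat) : seq bool :=
  match k with
  | 0 => [:: la]
  | k'.+1 => TM k' ++ compl (TM k')
  end.

(* w_n, for n >= 1 (w_0 is unused) *)
Definition w (n : nat) : seq bool :=
  match n with
  | 0 => [::]
  | 1 => [:: la]
  | 2 => [:: lb]
  | 3 => [:: lb; la]
  | 4 => [:: lb; la; la; lb; lb; la; la]
  | _ => lb :: TM (2 * n - 8) ++ compl (TM (2 * n - 6))
            ++ dropLast (compl (TM (2 * n - 6)))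
  end.

Definition Wprefix (n : nat) : seq bool := flatten [seq w k | k <- iota 1 n].

(* the infinite word W = w_1 w_2 w_3 ..., as a function nat -> letter;
   since every w_k (k >= 1) is nonempty, Wprefix i.+1 has length > i *)
Definition W (i : nat) : bool := nth la (Wprefix i.+1) i.

Definition tau_letter (c : bool) : seq bool := if c then [:: lb; la] else [:: la; lb].
Definition tau (x : nat -> bool) : nat -> bool :=
  fun i => nth la (tau_letter (x (i %/ 2))) (i %% 2).

(* Main.v *)
Require Import Defs.
From mathcomp Require Import all_boot.
From mathcomp Require Import zify.

Definition t1 (s : seq bool) : seq bool := flatten (map tau_letter s).

Lemma t1_cat s u : t1 (s ++ u) = t1 s ++ t1 u.
Proof. by rewrite /t1 map_cat flatten_cat. Qed.

Lemma t1_compl s : t1 (compl s) = compl (t1 s).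
Proof. by elim: s => [|c s IH] //=; rewrite /t1 /= -/(t1 _) IH; case: c. Qed.

Lemma size_t1 s : size (t1 s) = 2 * size s.
Proof. elim: s => [|c s IH] //=; rewrite /t1 /= size_cat -/(t1 _) IH; case: c => /=; lia. Qed.

Lemma t1_TM k : t1 (TM k) = TM k.+1.
Proof. elim: k => [|k IH] //=. by rewrite t1_cat t1_compl IH. Qed.

Lemma TM_ne k : TM k <> [::].
Proof. by elim: k => //= k; case: (TM k). Qed.

Lemma TM_last k : last la (TM k) = odd k.
Proof.
elim: k => [|k IH] //=.
rewrite last_cat /compl; move: (TM_ne k) IH; case: (TM k) => [|c s] // _.
by rewrite /= last_map => ->.
Qed.

Lemma dropLast_cTM m : dropLast (compl (TM (2 * m))) ++ [:: lb] = compl (TM (2 * m)).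
Proof.
have := TM_last (2 * m); rewrite oddM /=.
have := TM_ne (2 * m).
case/lastP: (TM (2 * m)) => [|s x] // _; rewrite last_rcons => ->.
by rewrite /dropLast /compl map_rcons size_rcons /= -cats1 take_size_cat ?size_map.
Qed.

Lemma Wprefix_S n : Wprefix n.+1 = Wprefix n ++ w n.+1.
Proof. by rewrite /Wprefix -[n.+1]addn1 iotaD map_cat flatten_cat add1n addn1 /= cats0. Qed.

Lemma Wprefix_add m k : Wprefix (m + k) = Wprefix m ++ flatten [seq w j | j <- iota (1 + m) k].
Proof. by rewrite /Wprefix iotaD map_cat flatten_cat. Qed.

Lemma size_w k : 0 < k -> 0 < size (w k).
Proof. by case: k => [|[|[|[|[|k]]]]]. Qed.

Lemma size_Wprefix n : n <= size (Wprefix n).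
Proof.
elim: n => [|n IH] //. rewrite Wprefix_S size_cat.
have := @size_w n.+1 (ltn0Sn n); lia.
Qed.

Lemma W_nth m j : j < size (Wprefix m) -> W j = nth la (Wprefix m) j.
Proof.
move=> Hj; rewrite /W.
case: (leqP m j.+1) => H.
  by rewrite -(subnKC H) Wprefix_add nth_cat Hj.
have Hs := size_Wprefix j.+1.
by rewrite -(subnKC (ltnW H)) Wprefix_add nth_cat (leq_trans _ Hs).
Qed.

Lemma tau_nth (x : nat -> bool) s :
  (forall j, j < size s -> x j = nth la s j) ->
  forall i, i < 2 * size s -> tau x i = nth la (t1 s) i.
Proof.
elim: s x => [|c s IH] x Hx i Hi; first by rewrite muln0 in Hi.
rewrite /t1 /= -/(t1 _).
case: i Hi => [|[|i]] Hi.
- by rewrite /tau div0n mod0n (Hx 0) //=; case: (c).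
- have E1 : 1 %/ 2 = 0 by [].
  have E2 : 1 %% 2 = 1 by [].
  by rewrite /tau E1 E2 (Hx 0) //=; case: (c).
have -> : tau x i.+2 = tau (fun j => x j.+1) i.
  by rewrite /tau -addn2 divnDr // modnDr divnn /= addn1.
rewrite IH.
- by case: (c).
- by move=> j Hj; rewrite Hx.
- by move: Hi => /=; lia.
Qed.

Definition v m := TM (2 * m) ++ compl (TM (2 * m + 2)) ++ compl (TM (2 * m + 2)).

Lemma t2_v m : t1 (t1 (v m)) = v m.+1.
Proof.
rewrite /v !t1_cat !t1_compl !t1_TM.
have E1 : (2 * m).+2 = 2 * m.+1 by lia.
have E2 : (2 * m + 2).+2 = 2 * m.+1 + 2 by lia.
by rewrite E1 E2.
Qed.

Lemma w_eq k : w k.+4.+1 = lb :: TM (2 * k.+1) ++ compl (TM (2 * k.+2)) ++ dropLast (compl (TM (2 * k.+2))).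
Proof.
cbv beta iota delta [w].
have E1 : 2 * k.+4.+1 - 8 = 2 * k.+1 by lia.
have E2 : 2 * k.+4.+1 - 6 = 2 * k.+2 by lia.
by rewrite E1 E2.
Qed.

Lemma Wprefix_step k : Wprefix (k + 5) ++ [:: lb] = (Wprefix (k + 4) ++ [:: lb]) ++ v k.+1.
Proof.
have E : k + 5 = (k + 4).+1 by lia.
have E' : (k + 4).+1 = k.+4.+1 by lia.
have E2 : 2 * k.+1 + 2 = 2 * k.+2 by lia.
rewrite E Wprefix_S E' w_eq /v E2.
have H := dropLast_cTM k.+2.
move: (Wprefix (k + 4)) (TM (2 * k.+1)) (compl (TM (2 * k.+2))) H => P A C H.
by rewrite -!catA cat_cons -!catA H.
Qed.

Lemma key k : t1 (t1 (Wprefix (k + 4) ++ [:: lb])) = Wprefix (k + 5) ++ [:: lb].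
Proof.
elim: k => [|k IH]; first by vm_compute.
have E : k.+1 + 4 = k + 5 by lia.
rewrite E (Wprefix_step k) (t1_cat (Wprefix (k + 4) ++ [:: lb])) t1_cat IH t2_v.
have := Wprefix_step k.+1.
by rewrite E => ->.
Qed.

Theorem mainTheorem10 : forall i : nat, tau (tau W) i = W i.
Proof.
move=> i.
set s := Wprefix (i + 4).
have Hi : i < size s by have := size_Wprefix (i + 4); rewrite -/s; lia.
have HW : forall j, j < size s -> W j = nth la s j by move=> j; apply: W_nth.
have HtW : forall j, j < size (t1 s) -> tau W j = nth la (t1 s) j.
  by move=> j; rewrite size_t1; apply: tau_nth.
rewrite (@tau_nth (tau W) (t1 s) HtW); last by rewrite size_t1; lia.
have K := key i; rewrite t1_cat t1_cat -/s in K.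
have Hs1 : i < size (t1 (t1 s)) by rewrite !size_t1; lia.
have Hs2 : size s <= size (Wprefix (i + 5)).
  have E : i + 5 = (i + 4).+1 by lia.
  by rewrite E Wprefix_S size_cat -/s leq_addr.
have -> : nth la (t1 (t1 s)) i = nth la (t1 (t1 s) ++ t1 (t1 [:: lb])) i by rewrite nth_cat Hs1.
rewrite K nth_cat (leq_trans Hi Hs2).
by rewrite (@W_nth (i + 5) i (leq_trans Hi Hs2)).
Qed.
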